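(* Let $\mathbb{K}$ have characteristic $p>2$ and let $m\ge2$ be even. Let $K^{2,m}$ be the Lie superalgebra with basis $x_0,x_1\,|\,y_1,\dots,y_m$ (even $|$ odd) and nonzero brackets $[x_0,y_i]=-[y_i,x_0]=y_{i+1}$ for $1\le i\le m-1$ and $[y_i,y_{m-i}]=[y_{m-i},y_i]=(-1)^{(m-2i)/2}x_1$ for $1\le i\le m/2$. Then $K^{2,m}$ admits a $p|2p$-structure if and only if $m\le p$, and in that case the $p|2p$-structures are exactly those given by $x_0^{[p]}=s_1x_1$, $x_1^{[p]}=s_2x_1$ with $s_1,s_2\in\mathbb{K}$.
   Context: A $p|2p$-structure on a Lie superalgebra $L$ over a field of characteristic $p>2$ is a map $x\mapsto x^{[p]}$, $L_{\bar0}\to L_{\bar0}$, with $(\lambda x)^{[p]}=\lambda^px^{[p]}$, $(x+y)^{[p]}=x^{[p]}+y^{[p]}+\sum_{i=1}^{p-1}s_i(x,y)$ (where $i s_i(x,y)$ is the coefficient of $\lambda^{i-1}$ in $(\mathrm{ad}_{\lambda x+y})^{p-1}(x)$), and $\mathrm{ad}_{x^{[p]}}(y)=(\mathrm{ad}_x)^p(y)$ for all $x\in L_{\bar0}$, $y\in L$. *)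

(* Defs.v *)
From HB Require Import structures.
From mathcomp Require Import all_boot all_order all_algebra.
Set Implicit Arguments. Unset Strict Implicit. Unset Printing Implicit Defensive.
Import GRing.Theory.
Local Open Scope ring_scope.

(* The superalgebra is given by a K-vector space V, a (bilinear) bracket br
   and a predicate [even] describing the even part L_0.                   *)

Section P2P.
Variables (K : fieldType) (V : lmodType K) (br : V -> V -> V).

(* For a word w in {x,y}^(p-1) (true = x, false = y) the term
   ad_{w_1} ... ad_{w_(p-1)} (x). *)
Definition adword (n : nat) (x y : V) (w : {ffun 'I_n -> bool}) : V :=
  foldr (fun k acc => br (if w k then x else y) acc) x (enum 'I_n).

(* s_i(x,y): i s_i(x,y) is the coefficient of lambda^(i-1) in
   (ad_{lambda x + y})^(p-1)(x), i.e. the sum over words with exactly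
   i-1 letters x. *)
Definition s_term (p i : nat) (x y : V) : V :=
  (i%:R)^-1 *: \sum_(w : {ffun 'I_p.-1 -> bool} | #|[pred k | w k]| == i.-1)
     adword x y w.

Definition p2p_structure (even : pred V) (p : nat) (f : V -> V) : Prop :=
  [/\ (forall x, even x -> even (f x)),
      (forall (l : K) x, even x -> f (l *: x) = l ^+ p *: f x),
      (forall x y, even x -> even y ->
          f (x + y) = f x + f y + \sum_(1 <= i < p) s_term p i x y)
    & (forall x y, even x -> br (f x) y = iter p (br x) y)].
End P2P.

(* Realised on K^(m+2) = 'rV[K]_(m.+2): index 0 is x_0, index 1 is x_1,
   index k (2 <= k <= m+1) is y_(k-1). *)

Section K2m.
Variables (K : fieldType) (m : nat).

Definition K2m_e (k : 'I_(m.+2)) : 'rV[K]_(m.+2) := delta_mx 0 k.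
Definition K2m_x0 : 'rV[K]_(m.+2) := K2m_e (inord 0).
Definition K2m_x1 : 'rV[K]_(m.+2) := K2m_e (inord 1).
Definition K2m_y (i : nat) : 'rV[K]_(m.+2) := K2m_e (inord i.+1).

Definition K2m_bb (k l : 'I_(m.+2)) : 'rV[K]_(m.+2) :=
  let i := (k : nat).-1 in let j := (l : nat).-1 in
  if ((k : nat) == 0%N) && (2 <= l <= m)%N then K2m_y j.+1
  else if ((l : nat) == 0%N) && (2 <= k <= m)%N then - K2m_y i.+1
  else if (2 <= k)%N && (2 <= l)%N && (i + j == m)%N then
    (if (2 * i <= m)%N then (-1) ^+ ((m - 2 * i)./2) *: K2m_x1   (* [y_i,y_(m-i)], i <= m/2 *)
     else (-1) ^+ ((m - 2 * j)./2) *: K2m_x1)                    (* [y_(m-j),y_j], j <= m/2 *)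
  else 0.

Definition K2m_bracket (u v : 'rV[K]_(m.+2)) : 'rV[K]_(m.+2) :=
  \sum_(k < m.+2) \sum_(l < m.+2) (u 0 k * v 0 l) *: K2m_bb k l.

Definition K2m_even : pred 'rV[K]_(m.+2) :=
  fun v => [forall k : 'I_(m.+2), (2 <= k)%N ==> (v 0 k == 0)].
End K2m.

(* Main.v *)
Require Import Defs.
From HB Require Import structures.
From mathcomp Require Import all_boot all_order all_algebra zify ring.
Set Implicit Arguments. Unset Strict Implicit. Unset Printing Implicit Defensive.
Import GRing.Theory.
Local Open Scope ring_scope.
Section S.
Variables (K : fieldType) (m : nat).
Notation VV := 'rV[K]_(m.+2).
Notation br := (@K2m_bracket K m).

Lemma evenP (v : VV) : K2m_even v -> forall k : 'I_(m.+2), (2 <= k)%N -> v 0 k = 0.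
Proof. by move=> /forallP H k Hk; apply/eqP; move: (H k); rewrite Hk. Qed.

Lemma bb1 (k l : 'I_(m.+2)) : (k : nat) = 1%N -> K2m_bb K k l = 0.
Proof. by move=> Hk; rewrite /K2m_bb Hk /= andbF. Qed.

Lemma bb0 (k l j : 'I_(m.+2)) : (k : nat) = 0%N ->
  K2m_bb K k l 0 j = if ((2 <= l <= m)%N && (j == l.+1 :> nat))%N then 1 else 0.
Proof.
move=> Hk; rewrite /K2m_bb Hk /=.
case: ifP => Hl; last by rewrite andbF /= mxE.
case/andP: Hl => H1 H2.
rewrite /K2m_y /K2m_e mxE /=.
have E : (l.-1.+2 = l.+1)%N by rewrite prednK // (leq_trans _ H1).
rewrite -val_eqE /= inordK E; last by rewrite ltnS ltnS.
by case: (j == l.+1 :> nat).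
Qed.
Lemma br_even_coord (x v : VV) (j : 'I_(m.+2)) : K2m_even x ->
  br x v 0 j = if (3 <= j)%N then x 0 ord0 * v 0 (inord j.-1) else 0.
Proof.
move=> Ex; rewrite /K2m_bracket (summxE (V:=K)) (bigD1 ord0) //=.
rewrite [X in _ + X]big1 ?addr0; last first.
  move=> k Hk; rewrite (summxE (V:=K)) big1 // => l _; rewrite mxE.
  case: (ltnP 1 k) => Hk1; first by rewrite (evenP Ex Hk1) !mul0r.
  have Hk' : (k : nat) = 1%N.
    by move: Hk Hk1; rewrite -val_eqE /=; case: (k : nat) => [|[|]].
  by rewrite bb1 // mxE mulr0.
rewrite (summxE (V:=K)).
under eq_bigr => l _ do rewrite mxE bb0 //.
case: ifP => Hj.
  have Hj1 : (j.-1 < m.+2)%N by rewrite (leq_ltn_trans (leq_pred _)).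
  have Hc : (1 < j.-1 <= m)%N by have := ltn_ord j; lia.
  rewrite (bigD1 (inord j.-1)) //= inordK // Hc prednK ?eqxx; last by lia.
  rewrite mulr1 big1 ?addr0 // => l Hl.
  case: ifP; rewrite ?mulr0 // => /andP [_ /eqP Ejl].
  by move: Hl; rewrite -val_eqE /= inordK // Ejl eqxx.
rewrite big1 // => l _; case: ifP; rewrite ?mulr0 // => /andP [/andP [H2 _] /eqP Ejl].
by move: Hj; rewrite Ejl ltnS H2.
Qed.
Lemma iter_even_coord (x v : VV) n (j : 'I_(m.+2)) : K2m_even x ->
  iter n.+1 (br x) v 0 j =
  if (n.+3 <= j)%N then x 0 ord0 ^+ n.+1 * v 0 (inord (j - n.+1)) else 0.
Proof.
move=> Ex; elim: n j => [|n IH] j.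
  by rewrite /= br_even_coord // expr1 subn1.
rewrite iterS br_even_coord // IH.
have Hj1 : (j.-1 < m.+2)%N by have := ltn_ord j; lia.
rewrite inordK //.
case: (ltnP n.+2 j.-1) => H.
  have -> : (3 <= j)%N by lia.
  have -> : (n.+4 <= j)%N by lia.
  rewrite /=.
  by rewrite mulrA -exprS; congr (_ * v 0 (inord _)); lia.
case: ifP; rewrite ?mulr0 // => H1; case: ifP => // H2; lia.
Qed.
Lemma eE (i : nat) (k : 'I_(m.+2)) : (i < m.+2)%N ->
  K2m_e K (inord i) 0 k = (k == i :> nat)%:R.
Proof. by move=> Hi; rewrite /K2m_e mxE eqxx /= -val_eqE /= inordK. Qed.

Lemma addE (u v : VV) k : (u + v) 0 k = u 0 k + v 0 k.
Proof. by rewrite mxE. Qed.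
Lemma scaleE a (u : VV) k : (a *: u) 0 k = a * u 0 k.
Proof. by rewrite mxE. Qed.

Lemma x0E k : K2m_x0 K m 0 k = (k == 0%N :> nat)%:R.
Proof. exact: eE. Qed.
Lemma x1E k : K2m_x1 K m 0 k = (k == 1%N :> nat)%:R.
Proof. exact: eE. Qed.

Lemma evenI (v : VV) : (forall k : 'I_(m.+2), (2 <= k)%N -> v 0 k = 0) -> K2m_even v.
Proof. by move=> H; apply/forallP => k; apply/implyP => Hk; rewrite H. Qed.

Lemma even_comb a b : K2m_even (a *: K2m_x0 K m + b *: K2m_x1 K m).
Proof.
apply: evenI => k Hk; rewrite addE !scaleE x0E x1E.
by move: Hk; case: k => [[|[|k]] Hk] //= _; rewrite !mulr0 addr0.
Qed.

Lemma even_decomp (x : VV) : K2m_even x ->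
  x = x 0 ord0 *: K2m_x0 K m + x 0 (inord 1) *: K2m_x1 K m.
Proof.
move=> Ex; apply/rowP => k; rewrite addE !scaleE x0E x1E.
case: k => [[|[|k]] Hk].
- by rewrite /= mulr1 mulr0 addr0; congr (x 0 _); apply: val_inj.
- by rewrite /= mulr1 mulr0 add0r; congr (x 0 _); apply: val_inj; rewrite /= inordK.
- by rewrite /= !mulr0 addr0 (evenP Ex).
Qed.

Lemma br_even_even (e x : VV) : K2m_even e -> K2m_even x -> br e x = 0.
Proof.
move=> Ee Ex; apply/rowP => j; rewrite br_even_coord // mxE.
case: ifP => // Hj; rewrite (evenP Ex) ?mulr0 //.
by rewrite inordK; have := ltn_ord j; lia.
Qed.

Lemma br_x0 (e : VV) : K2m_even e -> br e 0 = 0.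
Proof.
by move=> Ee; apply/rowP => j; rewrite br_even_coord // !mxE; case: ifP; rewrite ?mulr0.
Qed.

Lemma br_zero00 (e v : VV) : K2m_even e -> e 0 ord0 = 0 -> br e v = 0.
Proof.
by move=> Ee E0; apply/rowP => j; rewrite br_even_coord // E0 mxE; case: ifP; rewrite ?mul0r.
Qed.

Lemma iter_zero (x v : VV) p : K2m_even x -> (0 < p)%N -> (m <= p)%N -> iter p (br x) v = 0.
Proof.
move=> Ex; case: p => // n _ Hm; apply/rowP => j; rewrite iter_even_coord // mxE.
by case: ifP => // H; have := ltn_ord j; lia.
Qed.

Lemma foldr_br n (F : 'I_n -> VV) (x : VV) (s : seq 'I_n) :
  (forall k, K2m_even (F k)) -> K2m_even x -> s != [::] ->
  foldr (fun k acc => br (F k) acc) x s = 0.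
Proof.
move=> EF Ex; elim: s => [//|a s IH] _ /=.
case: s IH => [|b s] IH; first exact: br_even_even.
by rewrite [foldr _ _ (b :: s)]IH // br_x0.
Qed.

Lemma adword0 n (x y : VV) (w : {ffun 'I_n -> bool}) : (0 < n)%N ->
  K2m_even x -> K2m_even y -> adword br x y w = 0.
Proof.
move=> Hn Ex Ey; rewrite /adword; apply: foldr_br => //.
  by move=> k; case: (w k).
by rewrite -size_eq0 size_enum_ord -lt0n.
Qed.

Lemma s_term0 p i (x y : VV) : (1 < p)%N -> K2m_even x -> K2m_even y ->
  s_term br p i x y = 0.
Proof.
move=> Hp Ex Ey; rewrite /s_term big1 ?scaler0 // => w _; apply: adword0 => //.
by rewrite -ltnS prednK // ltnW.
Qed.

Lemma sum_s0 p (x y : VV) : (1 < p)%N -> K2m_even x -> K2m_even y ->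
  \sum_(1 <= i < p) s_term br p i x y = 0.
Proof. by move=> Hp Ex Ey; rewrite big1 // => i _; apply: s_term0. Qed.
Lemma frobD p (chK : p \in [pchar K]) (a b : K) : (a + b) ^+ p = a ^+ p + b ^+ p.
Proof. by have := pFrobenius_autD_comm chK (mulrC a b); rewrite !pFrobenius_autE. Qed.

Lemma evenZ l (x : VV) : K2m_even x -> K2m_even (l *: x).
Proof. by move=> Ex; apply: evenI => k Hk; rewrite scaleE (evenP Ex) ?mulr0. Qed.
Lemma evenD (x y : VV) : K2m_even x -> K2m_even y -> K2m_even (x + y).
Proof. by move=> Ex Ey; apply: evenI => k Hk; rewrite addE (evenP Ex) ?(evenP Ey) ?addr0. Qed.

Lemma part2 p : p \in [pchar K] -> (2 < p)%N -> (2 <= m)%N -> (m <= p)%N ->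
  forall f : VV -> VV,
     p2p_structure br (@K2m_even K m) p f <->
     exists s1 s2 : K, forall a b : K,
       f (a *: K2m_x0 K m + b *: K2m_x1 K m) =
       (a ^+ p * s1 + b ^+ p * s2) *: K2m_x1 K m.
Proof.
move=> chK Hp Hm Hmp f.
have Hp0 : (0 < p)%N by lia.
have E0 : K2m_even (K2m_x0 K m) by have := even_comb 1 0; rewrite scale0r addr0 scale1r.
have E1 : K2m_even (K2m_x1 K m) by have := even_comb 0 1; rewrite scale0r add0r scale1r.
split.
- case=> Hev Hsc Had Hbr.
  have key : forall x, K2m_even x -> f x = f x 0 (inord 1) *: K2m_x1 K m.
    move=> x Ex; have Efx := Hev x Ex.
    have Z : f x 0 ord0 = 0.
      have := congr1 (fun M : VV => M 0 (inord 3)) (Hbr x (K2m_y K m 1) Ex).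
      rewrite /= iter_zero // br_even_coord // inordK; last lia.
      rewrite /K2m_y eE /=; last lia.
      by rewrite inordK /= ?mulr1 ?mxE //; lia.
    by rewrite {1}(even_decomp Efx) Z scale0r add0r.
  exists (f (K2m_x0 K m) 0 (inord 1)), (f (K2m_x1 K m) 0 (inord 1)) => a b.
  rewrite Had ?evenZ // sum_s0 ?addr0 ?evenZ //; last lia.
  by rewrite !Hsc // {1}(key _ E0) {1}(key _ E1) !scalerA -scalerDl.
- case=> s1 [s2 H].
  pose c := fun x : VV => x 0 ord0 ^+ p * s1 + x 0 (inord 1) ^+ p * s2.
  have fE : forall x, K2m_even x -> f x = c x *: K2m_x1 K m.
    by move=> x Ex; rewrite {1}(even_decomp Ex) H.
  split.
  + by move=> x Ex; rewrite fE // evenZ.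
  + move=> l x Ex.
    rewrite !fE ?evenZ // scalerA /c !scaleE !exprMn; congr (_ *: _); ring.
  + move=> x y Ex Ey.
    rewrite sum_s0 ?addr0 //; last lia.
    rewrite !fE ?evenD // -scalerDl /c !addE !(frobD chK); congr (_ *: _); ring.
  + move=> x y Ex; rewrite fE // br_zero00 ?evenZ ?iter_zero //.
    by rewrite scaleE x1E mulr0.
Qed.
End S.

Unset Implicit Arguments.
Theorem mainTheorem13 (K : fieldType) (p m : nat) :
  p \in [pchar K] -> (2 < p)%N -> (2 <= m)%N -> ~~ odd m ->
  ((exists f : 'rV[K]_(m.+2) -> 'rV[K]_(m.+2),
      p2p_structure (@K2m_bracket K m) (@K2m_even K m) p f) <-> (m <= p)%N) /\
  ((m <= p)%N ->
   forall f : 'rV[K]_(m.+2) -> 'rV[K]_(m.+2),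
     p2p_structure (@K2m_bracket K m) (@K2m_even K m) p f <->
     exists s1 s2 : K, forall a b : K,
       f (a *: K2m_x0 K m + b *: K2m_x1 K m) =
       (a ^+ p * s1 + b ^+ p * s2) *: K2m_x1 K m).
Proof.
move=> chK Hp Hm Hodd.
split; last by move=> Hmp f; apply: part2.
split.
- case=> f [Hev Hsc Had Hbr]; case: (leqP m p) => // Hlt; exfalso.
  have E0 : K2m_even (K2m_x0 K m) by have := @even_comb K m 1 0; rewrite scale0r addr0 scale1r.
  have := congr1 (fun M : 'rV[K]_(m.+2) => M 0 (inord p.+2)) (Hbr _ (K2m_y K m 1) E0).
  rewrite /= br_even_coord ?Hev // inordK; last lia.
  case: p chK Hp Hlt Hev Hsc Had Hbr => [//|n] chK Hp Hlt Hev Hsc Had Hbr.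
  rewrite iter_even_coord // inordK; last lia.
  rewrite /K2m_y !eE; try lia.
  rewrite /= !inordK /=; try lia.
  case: n {Hev Hsc Had Hbr chK Hlt} Hp => [//|n] Hp.
  rewrite ltnSn subSS subSS (_ : (n.+2 - n = 2)%N); last lia.
  rewrite /= expr1n mul1r mulr0 => /eqP.
  by rewrite eq_sym oner_eq0.
- move=> Hmp; exists (fun _ => 0); apply/(part2 chK Hp Hm Hmp).
  by exists 0, 0 => a b; rewrite !mulr0 addr0 scale0r.
Qed.
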